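(* For all $n,m,N\in\mathbb{Z}$ the automorphisms $s_0,s_1,s_2,\pi,w_0,w_1,r$ act on the $\tau$ functions $\tau^{n,m}_N$ as follows: \[ s_0(\tau^{n,m}_{N})=\tau^{-n,m-n}_{N},\quad s_1(\tau^{n,m}_{N})=\tau^{m-1,n+1}_{N},\quad s_2(\tau^{n,m}_{N})=\tau^{n-m,-m}_{N},\quad \pi(\tau^{n,m}_{N})=\tau^{-m,n-m+1}_{N}, \] \[ w_0(\tau^{n,m}_{N})=\tau^{n,m}_{-N},\quad w_1(\tau^{n,m}_{N})=\tau^{n,m}_{2-N},\quad r(\tau^{n,m}_{N})=\tau^{n,m}_{1-N}. \]
   Context: Let $Q\in\mathbb{C}^\times$ be generic and let $\alpha_0,\alpha_1,\gamma$ be indeterminates; put $\alpha_2:=Q\alpha_0^{-1}\alpha_1^{-1}$, so $\alpha_0\alpha_1\alpha_2=Q$ (these are sixth roots of the usual parameters: $q=Q^6$, $a_i=\alpha_i^6$, $c=\gamma^6$). Let $\tau_i,\bar\tau_i$ ($i\in\mathbb{Z}/3\mathbb{Z}$) be six further indeterminates and $K=\mathbb{C}(\alpha_0,\alpha_1,\gamma,\tau_0,\tau_1,\tau_2,\bar\tau_0,\bar\tau_1,\bar\tau_2)$. Indices are taken mod 3. Define field automorphisms $s_0,s_1,s_2,\pi,w_0,w_1,r$ of $K$ (fixing $\mathbb{C}$) as follows. On parameters: $s_i(\alpha_i)=\alpha_i^{-1}$, $s_i(\alpha_j)=\alpha_j\alpha_i$ ($j\neq i$), $\pi(\alpha_j)=\alpha_{j+1}$,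 $s_i(\gamma)=\pi(\gamma)=\gamma$; $w_0,w_1,r$ fix every $\alpha_j$, and $w_0(\gamma)=\gamma^{-1}$, $w_1(\gamma)=Q^{-2}\gamma^{-1}$, $r(\gamma)=Q^{-1}\gamma^{-1}$. With $u_i=Q^{-2}\gamma^{-4}\alpha_i^6$ and $v_i=Q^{2}\gamma^{4}\alpha_i^6$: $s_i(\tau_i)=\dfrac{u_i\tau_{i+1}\bar\tau_{i-1}+\bar\tau_{i+1}\tau_{i-1}}{Q^{-1}\gamma^{-2}\alpha_i^{3}\,\bar\tau_i}$, $s_i(\bar\tau_i)=\dfrac{v_i\bar\tau_{i+1}\tau_{i-1}+\tau_{i+1}\bar\tau_{i-1}}{Q\gamma^{2}\alpha_i^{3}\,\tau_i}$, and $s_i$ fixes $\tau_j,\bar\tau_j$ for $j\ne i$; $\pi(\tau_i)=\tau_{i+1}$, $\pi(\bar\tau_i)=\bar\tau_{i+1}$; $w_0(\tau_i)=\tau_i$, $w_0(\bar\tau_i)=\dfrac{\alpha_{i+1}^2(\bar\tau_i\tau_{i+1}\tau_{i+2}+u_{i-1}\tau_i\bar\tau_{i+1}\tau_{i+2}+u_{i+1}^{-1}\tau_i\tau_{i+1}\bar\tau_{i+2})}{\alpha_{i+2}^2\,\bar\tau_{i+1}\bar\tau_{i+2}}$; $w_1(\bar\tau_i)=\bar\tau_i$, $w_1(\tau_i)=\dfrac{\alpha_{i+1}^2(\tau_i\bar\tau_{i+1}\bar\tau_{i+2}+v_{i-1}\bar\tau_i\tau_{i+1}\bar\tau_{i+2}+v_{i+1}^{-1}\bar\tau_i\bar\tau_{i+1}\tau_{i+2})}{\alpha_{i+2}^2\,\tau_{i+1}\tau_{i+2}}$;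 $r(\tau_i)=\bar\tau_i$, $r(\bar\tau_i)=\tau_i$. A product of generators denotes composition of automorphisms ($xy=x\circ y$). These generate a realization of the extended affine Weyl group of type $(A_2+A_1)^{(1)}$. Set $T_1=\pi s_2s_1$, $T_2=s_1\pi s_2$, $T_4=rw_0$ (these commute), and define $\tau^{n,m}_N=T_1^{\,n}T_2^{\,m}T_4^{\,N}(\tau_1)$ for $n,m,N\in\mathbb{Z}$. *)

(* Defs.v *)
From HB Require Import structures.
From mathcomp Require Import all_boot all_order all_algebra.
From mathcomp Require Import complex.
From mathcomp Require Import mpoly.
From mathcomp Require Import Rstruct.

Set Implicit Arguments.
Unset Strict Implicit.
Unset Printing Implicit Defensive.

Import GRing.Theory.
Local Open Scope ring_scope.

Definition CC : fieldType := complex (Rdefinitions.R : rcfType).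

Section Realization.
Variable L : fieldType.

Definition alpha (Q a0 a1 : L) (i : 'I_3) : L :=
  match nat_of_ord i with
  | 0 => a0
  | 1 => a1
  | _ => Q / (a0 * a1)
  end.

Definition nxt (i : 'I_3) : 'I_3 := ordS i.
Definition prv (i : 'I_3) : 'I_3 := ord_pred i.

Definition uu (Q g : L) (al : 'I_3 -> L) (i : 'I_3) : L :=
  (Q ^+ 2)^-1 * (g ^+ 4)^-1 * al i ^+ 6.
Definition vv (Q g : L) (al : 'I_3 -> L) (i : 'I_3) : L :=
  Q ^+ 2 * g ^+ 4 * al i ^+ 6.

Definition gens (a0 a1 g : L) (tau taub : 'I_3 -> L) (k : 'I_9) : L :=
  match nat_of_ord k with
  | 0 => a0
  | 1 => a1
  | 2 => g
  | 3 => tau 0%R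
  | 4 => tau 1%R
  | 5 => tau (-1)%R
  | 6 => taub 0%R
  | 7 => taub 1%R
  | _ => taub (-1)%R
  end.

Definition s_tau (Q g : L) (al tau taub : 'I_3 -> L) (i : 'I_3) : L :=
  (uu Q g al i * tau (nxt i) * taub (prv i) + taub (nxt i) * tau (prv i))
  / (Q^-1 * (g ^+ 2)^-1 * al i ^+ 3 * taub i).

Definition s_taub (Q g : L) (al tau taub : 'I_3 -> L) (i : 'I_3) : L :=
  (vv Q g al i * taub (nxt i) * tau (prv i) + tau (nxt i) * taub (prv i))
  / (Q * g ^+ 2 * al i ^+ 3 * tau i).

(* w_0(taubar_i)   (note i+2 = i-1 mod 3) *)
Definition w0_taub (Q g : L) (al tau taub : 'I_3 -> L) (i : 'I_3) : L :=
  al (nxt i) ^+ 2 *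
  (taub i * tau (nxt i) * tau (prv i)
   + uu Q g al (prv i) * tau i * taub (nxt i) * tau (prv i)
   + (uu Q g al (nxt i))^-1 * tau i * tau (nxt i) * taub (prv i))
  / (al (prv i) ^+ 2 * taub (nxt i) * taub (prv i)).

Definition w1_tau (Q g : L) (al tau taub : 'I_3 -> L) (i : 'I_3) : L :=
  al (nxt i) ^+ 2 *
  (tau i * taub (nxt i) * taub (prv i)
   + vv Q g al (prv i) * taub i * tau (nxt i) * taub (prv i)
   + (vv Q g al (nxt i))^-1 * taub i * taub (nxt i) * tau (prv i))
  / (al (prv i) ^+ 2 * tau (nxt i) * tau (prv i)).

Definition zpow (f finv : L -> L) (k : int) (x : L) : L :=
  match k with
  | Posz n => iter n f x
  | Negz n => iter n.+1 finv x
  end.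

(* tau^{n,m}_N = T1^n T2^m T4^N (tau_1) *)
Definition tauNM (T1 T1i T2 T2i T4 T4i : L -> L) (t : L) (n m N : int) : L :=
  zpow T1 T1i n (zpow T2 T2i m (zpow T4 T4i N t)).

End Realization.

(* Main.v *)
Require Import Defs.
From HB Require Import structures.
From mathcomp Require Import all_boot all_order all_algebra.
From mathcomp Require Import complex mpoly Rstruct.
From mathcomp Require Import ring zify.
Import GRing.Theory.
Local Open Scope ring_scope.

Section Ext.
Variables (L : fieldType) (iota : {rmorphism CC -> L}) (h : 'I_9 -> L).
Hypothesis Hgen : forall x : L, exists p q : {mpoly CC[9]},
      x = mmap iota h p / mmap iota h q.

Lemma mmap_morph (F : {rmorphism L -> L}) p :
  F (mmap iota h p) = mmap (F \o iota) (F \o h) p.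
Proof.
rewrite /mmap rmorph_sum; apply: eq_bigr => m _.
rewrite rmorphM /mmap1 rmorph_prod /=; congr (_ * _).
by apply: eq_bigr => i _; rewrite rmorphXn.
Qed.

Lemma ext_gen (F G : {rmorphism L -> L}) :
  (forall c, F (iota c) = G (iota c)) -> (forall k, F (h k) = G (h k)) -> F =1 G.
Proof.
move=> Hc Hk x; have [p [q ->]] := Hgen x.
rewrite !fmorph_div !mmap_morph.
have e1 : mmap (F \o iota) (F \o h) p = mmap (G \o iota) (G \o h) p.
  by rewrite /mmap /mmap1; apply: eq_bigr => m _ /=; rewrite Hc;
     congr (_ * _); apply: eq_bigr => i _; rewrite Hk.
have e2 : mmap (F \o iota) (F \o h) q = mmap (G \o iota) (G \o h) q.
  by rewrite /mmap /mmap1; apply: eq_bigr => m _ /=; rewrite Hc;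
     congr (_ * _); apply: eq_bigr => i _; rewrite Hk.
by rewrite e1 e2.
Qed.
End Ext.

Lemma gen_neq0 (L : fieldType) (iota : {rmorphism CC -> L}) (h : 'I_9 -> L) :
  (forall p : {mpoly CC[9]}, mmap iota h p = 0 -> p = 0) -> forall k, h k != 0.
Proof.
move=> Hi k; apply/eqP => hk0.
have : mmap iota h 'X_k = 0 by rewrite mmapX mmap1U.
move/Hi => /(congr1 (mcoeff U_(k))).
by rewrite mcoeffXU eqxx mcoeff0 => /eqP; rewrite oner_eq0.
Qed.

Section Zpow.
Variable (L : fieldType).
Implicit Types (T Ti U Ui f : L -> L).

Lemma zpowS T Ti : cancel Ti T -> forall (n : int) x, zpow T Ti (n + 1) x = T (zpow T Ti n x).
Proof.
move=> K [k|[|k]] x.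
- have -> : (Posz k + 1 = Posz k.+1)%R by rewrite -addn1 PoszD.
  by [].
- have -> : (Negz 0 + 1 = 0)%R by [].
  by rewrite /= K.
- have -> : (Negz k.+1 + 1 = Negz k)%R by rewrite !NegzE; lia.
  by rewrite /= K.
Qed.

Lemma zpowP T Ti : cancel T Ti -> cancel Ti T -> forall (n : int) x, zpow T Ti (n - 1) x = Ti (zpow T Ti n x).
Proof.
move=> K1 K2 n x; by rewrite -{2}(subrK 1 n) zpowS // ?K1.
Qed.

Lemma zpow0 T Ti x : zpow T Ti 0 x = x. Proof. by []. Qed.

Lemma zadd T Ti : cancel T Ti -> cancel Ti T -> forall (a b : int) x,
  zpow T Ti (a + b) x = zpow T Ti a (zpow T Ti b x).
Proof.
move=> K1 K2 a b x; elim/int_ind: a => [|n IH|n IH]; first by rewrite add0r.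
- have -> : (n.+1%:Z = n%:Z + 1)%R by lia.
  by rewrite -addrA (addrC 1) addrA !zpowS // IH.
- have -> : (- (n.+1%:Z) = - n%:Z - 1)%R by lia.
  by rewrite -addrA (addrC (-1)) addrA !zpowP // IH.
Qed.

Lemma conj1 T Ti U Ui f : cancel T Ti -> cancel Ti T -> cancel U Ui -> cancel Ui U ->
  (forall x, f (T x) = U (f x)) -> forall n x, f (zpow T Ti n x) = zpow U Ui n (f x).
Proof.
move=> K1 K2 K3 K4 H n x; elim/int_ind: n => [//|n IH|n IH].
- have -> : (n.+1%:Z = n%:Z + 1)%R by lia.
  by rewrite !zpowS // H IH.
- have -> : (- (n.+1%:Z) = - n%:Z - 1)%R by lia.
  rewrite !zpowP // -IH.
  by rewrite -{2}(K2 (zpow T Ti (- n%:Z) x)) H K3.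
Qed.

Lemma zcomm T Ti U Ui : cancel T Ti -> cancel Ti T -> cancel U Ui -> cancel Ui U ->
  (forall x, T (U x) = U (T x)) -> forall a b x,
  zpow T Ti a (zpow U Ui b x) = zpow U Ui b (zpow T Ti a x).
Proof.
move=> K1 K2 K3 K4 H a b x.
apply: (@conj1 U Ui U Ui (zpow T Ti a)) => // y.
by apply: esym; apply: (@conj1 T Ti T Ti U).
Qed.
End Zpow.

Section Grp.
Variable (L : fieldType).
Variables (s0 s1 s2 pi w0 w1 r : L -> L) (t1 t2 : L).
Hypothesis ss0 : forall x, s0 (s0 x) = x.
Hypothesis br : forall x, s0 (s1 (s0 x)) = s1 (s0 (s1 x)).
Hypothesis ps0 : forall x, pi (s0 x) = s1 (pi x).
Hypothesis ps1 : forall x, pi (s1 x) = s2 (pi x).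
Hypothesis ps2 : forall x, pi (s2 x) = s0 (pi x).
Hypothesis p3 : forall x, pi (pi (pi x)) = x.
Hypothesis w0s0 : forall x, w0 (s0 x) = s0 (w0 x).
Hypothesis w0p : forall x, w0 (pi x) = pi (w0 x).
Hypothesis rs0 : forall x, r (s0 x) = s0 (r x).
Hypothesis rp : forall x, r (pi x) = pi (r x).
Hypothesis w0w0 : forall x, w0 (w0 x) = x.
Hypothesis rr : forall x, r (r x) = x.
Hypothesis rw0r : forall x, r (w0 (r x)) = w1 x.
Hypothesis s0t1 : s0 t1 = t1.
Hypothesis s2t1 : s2 t1 = t1.
Hypothesis s1t2 : s1 t2 = t2.
Hypothesis pit1 : pi t1 = t2.
Hypothesis w0t1 : w0 t1 = t1.

Lemma piS (P : L -> Prop) : (forall y, P (pi y)) -> forall x, P x.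
Proof. by move=> H x; rewrite -(p3 x); apply: H. Qed.

Lemma ss1 x : s1 (s1 x) = x.
Proof. move: x; apply: piS => y; by rewrite -!ps0 ss0. Qed.
Lemma ss2 x : s2 (s2 x) = x.
Proof. move: x; apply: piS => y; by rewrite -!ps1 ss1. Qed.
Ltac nrm := do 8 rewrite -?ps0 -?ps1 -?ps2.
Lemma br12 x : s1 (s2 (s1 x)) = s2 (s1 (s2 x)).
Proof. move: x; apply: piS => y; nrm; by rewrite br. Qed.
Lemma br20 x : s2 (s0 (s2 x)) = s0 (s2 (s0 x)).
Proof. move: x; apply: piS => y; nrm; by rewrite br12. Qed.
Lemma w0s1 x : w0 (s1 x) = s1 (w0 x).
Proof. move: x; apply: piS => y; nrm; by rewrite w0p w0s0 w0p -ps0. Qed.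
Lemma w0s2 x : w0 (s2 x) = s2 (w0 x).
Proof. move: x; apply: piS => y; nrm; by rewrite w0p w0s1 w0p -ps1. Qed.
Lemma rs1 x : r (s1 x) = s1 (r x).
Proof. move: x; apply: piS => y; nrm; by rewrite rp rs0 rp -ps0. Qed.
Lemma rs2 x : r (s2 x) = s2 (r x).
Proof. move: x; apply: piS => y; nrm; by rewrite rp rs1 rp -ps1. Qed.

Variables (T1i T2i T4i : L -> L).
Local Notation T1 := (pi \o s2 \o s1).
Local Notation T2 := (s1 \o pi \o s2).
Local Notation T4 := (r \o w0).
Hypotheses (K1 : cancel T1 T1i) (K1' : cancel T1i T1) (K2 : cancel T2 T2i) (K2' : cancel T2i T2)
  (K4 : cancel T4 T4i) (K4' : cancel T4i T4).

Ltac cm := do 8 rewrite -?rs1 -?rs2 -?rp -?rs0 -?w0s1 -?w0s2 -?w0p -?w0s0.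

Lemma c12 x : T1 (T2 x) = T2 (T1 x).
Proof. rewrite /= ss1; nrm; by rewrite -br12 ss1. Qed.
Lemma c14 x : T1 (T4 x) = T4 (T1 x). Proof. rewrite /=; cm; done. Qed.
Lemma c24 x : T2 (T4 x) = T4 (T2 x). Proof. rewrite /=; cm; done. Qed.
Lemma s0T1 x : T2 (T1 (s0 (T1 x))) = s0 x.
Proof. rewrite /=; nrm; rewrite ?ss0 ?ss1 ?ss2; by rewrite p3 -br ss0 ss1. Qed.
Lemma s0T2 x : s0 (T2 x) = T2 (s0 x).
Proof. rewrite /=; nrm; rewrite ?ss0 ?ss1 ?ss2; by rewrite br20. Qed.
Lemma s0T4 x : s0 (T4 x) = T4 (s0 x). Proof. rewrite /=; cm; done. Qed.
Lemma s1T1 x : s1 (T1 x) = T2 (s1 x). Proof. by []. Qed.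
Lemma s1T2 x : s1 (T2 x) = T1 (s1 x). Proof. by rewrite /= !ss1. Qed.
Lemma s1T4 x : s1 (T4 x) = T4 (s1 x). Proof. rewrite /=; cm; done. Qed.
Lemma gs1t1 : T1 (s1 t1) = T2 t1. Proof. by rewrite /= ss1 s2t1 pit1 s1t2. Qed.
Lemma s2T1 x : s2 (T1 x) = T1 (s2 x).
Proof. rewrite /=; nrm; rewrite ?ss0 ?ss1 ?ss2; by rewrite br12. Qed.
Lemma s2T2 x : T2 (T1 (s2 (T2 x))) = s2 x.
Proof. rewrite /=; nrm; rewrite ?ss0 ?ss1 ?ss2; by rewrite p3 -br ss0 ss1 ss0. Qed.
Lemma s2T4 x : s2 (T4 x) = T4 (s2 x). Proof. rewrite /=; cm; done. Qed.
Lemma piT1 x : pi (T1 x) = T2 (pi x).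
Proof. rewrite /=; nrm; rewrite ?ss0 ?ss1 ?ss2; done. Qed.
Lemma piT2 x : T2 (T1 (pi (T2 x))) = pi x.
Proof. rewrite /=; nrm; rewrite ?ss0 ?ss1 ?ss2; by rewrite p3 -br20 ss2 ss0 ss2. Qed.
Lemma piT4 x : pi (T4 x) = T4 (pi x). Proof. rewrite /=; cm; done. Qed.
Lemma gpit1 : pi t1 = T2 t1. Proof. by rewrite /= s2t1 pit1 s1t2. Qed.
Lemma w0T1 x : w0 (T1 x) = T1 (w0 x). Proof. rewrite /=; cm; done. Qed.
Lemma w0T2 x : w0 (T2 x) = T2 (w0 x). Proof. rewrite /=; cm; done. Qed.
Lemma w0T4 x : T4 (w0 (T4 x)) = w0 x. Proof. by rewrite /= w0w0 rr. Qed.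
Lemma rT1 x : r (T1 x) = T1 (r x). Proof. rewrite /=; cm; done. Qed.
Lemma rT2 x : r (T2 x) = T2 (r x). Proof. rewrite /=; cm; done. Qed.
Lemma rT4 x : T4 (r (T4 x)) = r x. Proof. by rewrite /= rr w0w0. Qed.
Lemma grt1 : r t1 = T4 t1. Proof. by rewrite /= w0t1. Qed.
Lemma w1T1 x : w1 (T1 x) = T1 (w1 x). Proof. by rewrite -!rw0r rT1 w0T1 rT1. Qed.
Lemma w1T2 x : w1 (T2 x) = T2 (w1 x). Proof. by rewrite -!rw0r rT2 w0T2 rT2. Qed.
Lemma w1T4 x : T4 (w1 (T4 x)) = w1 x. Proof. by rewrite -!rw0r /= rr w0w0. Qed.
Lemma gw1t1 : w1 t1 = T4 (T4 t1). Proof. by rewrite -rw0r /= w0t1. Qed.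

Definition E (a b c : int) x := zpow T1 T1i a (zpow T2 T2i b (zpow T4 T4i c x)).

Lemma z12 a b x : zpow T1 T1i a (zpow T2 T2i b x) = zpow T2 T2i b (zpow T1 T1i a x).
Proof. exact: (@zcomm _ _ _ _ _ K1 K1' K2 K2' c12). Qed.
Lemma z14 a b x : zpow T1 T1i a (zpow T4 T4i b x) = zpow T4 T4i b (zpow T1 T1i a x).
Proof. exact: (@zcomm _ _ _ _ _ K1 K1' K4 K4' c14). Qed.
Lemma z24 a b x : zpow T2 T2i a (zpow T4 T4i b x) = zpow T4 T4i b (zpow T2 T2i a x).
Proof. exact: (@zcomm _ _ _ _ _ K2 K2' K4 K4' c24). Qed.

Lemma Eadd a b c a' b' c' x : E a b c (E a' b' c' x) = E (a + a') (b + b') (c + c') x.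
Proof.
rewrite /E -z14 -z24 -(@zadd _ _ _ K4 K4') -z12 -(@zadd _ _ _ K2 K2') -(@zadd _ _ _ K1 K1').
done.
Qed.

Lemma Eeq a b c a' b' c' x : a = a' -> b = b' -> c = c' -> E a b c x = E a' b' c' x.
Proof. by move=> -> -> ->. Qed.

Lemma E0 x : E 0 0 0 x = x. Proof. by []. Qed.

Lemma conjE (f Tk Tki : L -> L) (d1 d2 d3 : int) : cancel Tk Tki -> cancel Tki Tk ->
  (forall x, f (Tk x) = E d1 d2 d3 (f x)) ->
  forall n x, f (zpow Tk Tki n x) = E (n * d1) (n * d2) (n * d3) (f x).
Proof.
move=> Ka Kb H n x; elim/int_ind: n => [|n IH|n IH]; first by rewrite !mul0r.
- have -> : (n.+1%:Z = n%:Z + 1)%R by lia.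
  rewrite zpowS // H IH Eadd; apply: Eeq; ring.
- have -> : (- (n.+1%:Z) = - n%:Z - 1)%R by lia.
  have Hi : forall y, f (Tki y) = E (- d1) (- d2) (- d3) (f y).
    move=> y; rewrite -{2}(Kb y) H Eadd.
    by rewrite !addNr E0.
  rewrite zpowP // Hi IH Eadd; apply: Eeq; ring.
Qed.

Lemma mainf (f : L -> L) (d1 d2 d3 e1 e2 e3 h1 h2 h3 c1 c2 c3 : int) :
  (forall x, f (T1 x) = E d1 d2 d3 (f x)) ->
  (forall x, f (T2 x) = E e1 e2 e3 (f x)) ->
  (forall x, f (T4 x) = E h1 h2 h3 (f x)) ->
  f t1 = E c1 c2 c3 t1 ->
  forall n m N, f (E n m N t1) = E (n * d1 + m * e1 + N * h1 + c1)
     (n * d2 + m * e2 + N * h2 + c2) (n * d3 + m * e3 + N * h3 + c3) t1.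
Proof.
move=> H1 H2 H4 Ht n m N.
rewrite {1}/E (@conjE _ _ _ _ _ _ K1 K1' H1) (@conjE _ _ _ _ _ _ K2 K2' H2) (@conjE _ _ _ _ _ _ K4 K4' H4) Ht !Eadd.
by apply: Eeq; ring.
Qed.

Lemma fromT2T1 (f : L -> L) x : T2 (T1 (f (T1 x))) = f x -> f (T1 x) = E (-1) (-1) 0 (f x).
Proof. move=> <-; by rewrite /E /= K2 K1. Qed.
Lemma fromT2T1' (f : L -> L) x : T2 (T1 (f (T2 x))) = f x -> f (T2 x) = E (-1) (-1) 0 (f x).
Proof. move=> <-; by rewrite /E /= K2 K1. Qed.
Lemma fromT4 (f : L -> L) x : T4 (f (T4 x)) = f x -> f (T4 x) = E 0 0 (-1) (f x).
Proof. move=> <-; by rewrite /E /= K4. Qed.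

Theorem grp_main :
  let tN := tauNM T1 T1i T2 T2i T4 T4i t1 in
  forall n m N : int,
  s0 (tN n m N) = tN (- n) (m - n) N /\
  s1 (tN n m N) = tN (m - 1) (n + 1) N /\
  s2 (tN n m N) = tN (n - m) (- m) N /\
  pi (tN n m N) = tN (- m) (n - m + 1) N /\
  w0 (tN n m N) = tN n m (- N) /\
  w1 (tN n m N) = tN n m (2 - N) /\
  r (tN n m N) = tN n m (1 - N).
Proof.
move=> tN n m N.
have tE : forall a b c, tN a b c = E a b c t1 by [].
rewrite !tE.
split.
  rewrite (@mainf s0 (-1) (-1) 0 0 1 0 0 0 1 0 0 0); last first.
  - by [].
  - by move=> x; rewrite s0T4.
  - by move=> x; rewrite s0T2.
  - by move=> x; apply: fromT2T1; rewrite s0T1.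
  by apply: Eeq; ring.
split.
  rewrite (@mainf s1 0 1 0 1 0 0 0 0 1 (-1) 1 0); last first.
  - apply: (can_inj K1); rewrite gs1t1 (_ : E (-1) 1 0 t1 = T1i (T2 t1)) // K1' //.
  - by move=> x; rewrite s1T4.
  - by move=> x; rewrite s1T2.
  - by move=> x; rewrite s1T1.
  by apply: Eeq; ring.
split.
  rewrite (@mainf s2 1 0 0 (-1) (-1) 0 0 0 1 0 0 0); last first.
  - by [].
  - by move=> x; rewrite s2T4.
  - by move=> x; apply: fromT2T1'; rewrite s2T2.
  - by move=> x; rewrite s2T1.
  by apply: Eeq; ring.
split.
  rewrite (@mainf pi 0 1 0 (-1) (-1) 0 0 0 1 0 1 0); last first.
  - by rewrite gpit1.
  - by move=> x; rewrite piT4.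
  - by move=> x; apply: fromT2T1'; rewrite piT2.
  - by move=> x; rewrite piT1.
  by apply: Eeq; ring.
split.
  rewrite (@mainf w0 1 0 0 0 1 0 0 0 (-1) 0 0 0); last first.
  - by [].
  - by move=> x; apply: fromT4; rewrite w0T4.
  - by move=> x; rewrite w0T2.
  - by move=> x; rewrite w0T1.
  by apply: Eeq; ring.
split.
  rewrite (@mainf w1 1 0 0 0 1 0 0 0 (-1) 0 0 2); last first.
  - by rewrite gw1t1.
  - by move=> x; apply: fromT4; rewrite w1T4.
  - by move=> x; rewrite w1T2.
  - by move=> x; rewrite w1T1.
  by apply: Eeq; ring.
rewrite (@mainf r 1 0 0 0 1 0 0 0 (-1) 0 0 1); last first.
- by rewrite grt1.
- by move=> x; apply: fromT4; rewrite rT4.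
- by move=> x; rewrite rT2.
- by move=> x; rewrite rT1.
by apply: Eeq; ring.
Qed.
End Grp.

Section Main.
Variables (L : fieldType) (iota : {rmorphism CC -> L}) (Q : CC) (HQ : Q != 0)
  (a0 a1 g : L) (tau taub : 'I_3 -> L).
Hypothesis Hindep : forall p : {mpoly CC[9]}, mmap iota (gens a0 a1 g tau taub) p = 0 -> p = 0.
Hypothesis Hgen : forall x : L, exists p q : {mpoly CC[9]},
      x = mmap iota (gens a0 a1 g tau taub) p / mmap iota (gens a0 a1 g tau taub) q.
Variables (s : 'I_3 -> {rmorphism L -> L}) (pi w0 w1 r : {rmorphism L -> L}).
Hypothesis HC : forall c : CC, [/\ forall i, s i (iota c) = iota c, pi (iota c) = iota c,
          w0 (iota c) = iota c, w1 (iota c) = iota c & r (iota c) = iota c].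
Hypothesis Hs_al : forall i j, s i (alpha (iota Q) a0 a1 j) =
      if i == j then (alpha (iota Q) a0 a1 i)^-1
      else alpha (iota Q) a0 a1 j * alpha (iota Q) a0 a1 i.
Hypothesis Hs_g : forall i, s i g = g.
Hypothesis Hpi_al : forall j, pi (alpha (iota Q) a0 a1 j) = alpha (iota Q) a0 a1 (nxt j).
Hypothesis Hpi_g : pi g = g.
Hypothesis Hw0_al : forall j, w0 (alpha (iota Q) a0 a1 j) = alpha (iota Q) a0 a1 j.
Hypothesis Hw1_al : forall j, w1 (alpha (iota Q) a0 a1 j) = alpha (iota Q) a0 a1 j.
Hypothesis Hr_al : forall j, r (alpha (iota Q) a0 a1 j) = alpha (iota Q) a0 a1 j.
Hypothesis Hw0_g : w0 g = g^-1.
Hypothesis Hw1_g : w1 g = ((iota Q) ^+ 2)^-1 * g^-1.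
Hypothesis Hr_g : r g = (iota Q)^-1 * g^-1.
Hypothesis Hs_tau : forall i, s i (tau i) = s_tau (iota Q) g (alpha (iota Q) a0 a1) tau taub i.
Hypothesis Hs_taub : forall i, s i (taub i) = s_taub (iota Q) g (alpha (iota Q) a0 a1) tau taub i.
Hypothesis Hs_other : forall i j, j != i -> s i (tau j) = tau j /\ s i (taub j) = taub j.
Hypothesis Hpi_tau : forall i, pi (tau i) = tau (nxt i) /\ pi (taub i) = taub (nxt i).
Hypothesis Hw0_tau : forall i, w0 (tau i) = tau i /\
      w0 (taub i) = w0_taub (iota Q) g (alpha (iota Q) a0 a1) tau taub i.
Hypothesis Hw1_tau : forall i, w1 (taub i) = taub i /\
      w1 (tau i) = w1_tau (iota Q) g (alpha (iota Q) a0 a1) tau taub i.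
Hypothesis Hr_tau : forall i, r (tau i) = taub i /\ r (taub i) = tau i.

Local Notation q := (iota Q).
Local Notation "'i0'" := (0%R : 'I_3).
Local Notation "'i1'" := (1%R : 'I_3).
Local Notation "'i2'" := (2%R : 'I_3).

Lemma nxt0 : nxt i0 = i1. Proof. exact/val_inj. Qed.
Lemma nxt1 : nxt i1 = i2. Proof. exact/val_inj. Qed.
Lemma nxt2 : nxt i2 = i0. Proof. exact/val_inj. Qed.
Lemma prv0 : prv i0 = i2. Proof. exact/val_inj. Qed.
Lemma prv1 : prv i1 = i0. Proof. exact/val_inj. Qed.
Lemma prv2 : prv i2 = i1. Proof. exact/val_inj. Qed.
Lemma m1_2 : (-1)%R = i2 :> 'I_3. Proof. exact/val_inj. Qed.
Lemma al0 : alpha q a0 a1 i0 = a0. Proof. by []. Qed.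
Lemma al1 : alpha q a0 a1 i1 = a1. Proof. by []. Qed.
Lemma al2 : alpha q a0 a1 i2 = q / (a0 * a1). Proof. by []. Qed.

Lemma s0q : s i0 q = q. Proof. by case: (HC Q) => ->. Qed.
Lemma s0g : s i0 g = g. Proof. exact: Hs_g. Qed.
Lemma s0t : s i0 (tau i0) = s_tau q g (alpha q a0 a1) tau taub i0. Proof. exact: Hs_tau. Qed.
Lemma s0b : s i0 (taub i0) = s_taub q g (alpha q a0 a1) tau taub i0. Proof. exact: Hs_taub. Qed.
Lemma s0t1 : s i0 (tau i1) = tau i1. Proof. by case: (@Hs_other i0 i1 isT). Qed.
Lemma s0b1 : s i0 (taub i1) = taub i1. Proof. by case: (@Hs_other i0 i1 isT). Qed.
Lemma s0t2 : s i0 (tau i2) = tau i2. Proof. by case: (@Hs_other i0 i2 isT). Qed.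
Lemma s0b2 : s i0 (taub i2) = taub i2. Proof. by case: (@Hs_other i0 i2 isT). Qed.
Lemma s0a0 : s i0 a0 = (alpha q a0 a1 i0)^-1. Proof. exact: (Hs_al i0 i0). Qed.
Lemma s0a1 : s i0 a1 = a1 * alpha q a0 a1 i0. Proof. exact: (Hs_al i0 i1). Qed.
Lemma s1q : s i1 q = q. Proof. by case: (HC Q) => ->. Qed.
Lemma s1g : s i1 g = g. Proof. exact: Hs_g. Qed.
Lemma s1t : s i1 (tau i1) = s_tau q g (alpha q a0 a1) tau taub i1. Proof. exact: Hs_tau. Qed.
Lemma s1b : s i1 (taub i1) = s_taub q g (alpha q a0 a1) tau taub i1. Proof. exact: Hs_taub. Qed.
Lemma s1t0 : s i1 (tau i0) = tau i0. Proof. by case: (@Hs_other i1 i0 isT). Qed.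
Lemma s1b0 : s i1 (taub i0) = taub i0. Proof. by case: (@Hs_other i1 i0 isT). Qed.
Lemma s1t2 : s i1 (tau i2) = tau i2. Proof. by case: (@Hs_other i1 i2 isT). Qed.
Lemma s1b2 : s i1 (taub i2) = taub i2. Proof. by case: (@Hs_other i1 i2 isT). Qed.
Lemma s1a0 : s i1 a0 = a0 * alpha q a0 a1 i1. Proof. exact: (Hs_al i1 i0). Qed.
Lemma s1a1 : s i1 a1 = (alpha q a0 a1 i1)^-1. Proof. exact: (Hs_al i1 i1). Qed.
Lemma s2q : s i2 q = q. Proof. by case: (HC Q) => ->. Qed.
Lemma s2g : s i2 g = g. Proof. exact: Hs_g. Qed.
Lemma s2t : s i2 (tau i2) = s_tau q g (alpha q a0 a1) tau taub i2. Proof. exact: Hs_tau. Qed.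
Lemma s2b : s i2 (taub i2) = s_taub q g (alpha q a0 a1) tau taub i2. Proof. exact: Hs_taub. Qed.
Lemma s2t0 : s i2 (tau i0) = tau i0. Proof. by case: (@Hs_other i2 i0 isT). Qed.
Lemma s2b0 : s i2 (taub i0) = taub i0. Proof. by case: (@Hs_other i2 i0 isT). Qed.
Lemma s2t1 : s i2 (tau i1) = tau i1. Proof. by case: (@Hs_other i2 i1 isT). Qed.
Lemma s2b1 : s i2 (taub i1) = taub i1. Proof. by case: (@Hs_other i2 i1 isT). Qed.
Lemma s2a0 : s i2 a0 = a0 * alpha q a0 a1 i2. Proof. exact: (Hs_al i2 i0). Qed.
Lemma s2a1 : s i2 a1 = a1 * alpha q a0 a1 i2. Proof. exact: (Hs_al i2 i1). Qed.
Lemma piq : pi q = q. Proof. by case: (HC Q). Qed.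
Lemma pia0 : pi a0 = a1. Proof. exact: (Hpi_al i0). Qed.
Lemma pia1 : pi a1 = q / (a0 * a1). Proof. exact: (Hpi_al i1). Qed.
Lemma pit0 : pi (tau i0) = tau i1. Proof. by case: (Hpi_tau i0); rewrite ?nxt0 ?nxt1 ?nxt2. Qed.
Lemma pib0 : pi (taub i0) = taub i1. Proof. by case: (Hpi_tau i0); rewrite ?nxt0 ?nxt1 ?nxt2. Qed.
Lemma pit1 : pi (tau i1) = tau i2. Proof. by case: (Hpi_tau i1); rewrite ?nxt0 ?nxt1 ?nxt2. Qed.
Lemma pib1 : pi (taub i1) = taub i2. Proof. by case: (Hpi_tau i1); rewrite ?nxt0 ?nxt1 ?nxt2. Qed.
Lemma pit2 : pi (tau i2) = tau i0. Proof. by case: (Hpi_tau i2); rewrite ?nxt0 ?nxt1 ?nxt2. Qed.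
Lemma pib2 : pi (taub i2) = taub i0. Proof. by case: (Hpi_tau i2); rewrite ?nxt0 ?nxt1 ?nxt2. Qed.
Lemma w0q : w0 q = q. Proof. by case: (HC Q). Qed.
Lemma w0a0 : w0 a0 = a0. Proof. exact: (Hw0_al i0). Qed.
Lemma w0a1 : w0 a1 = a1. Proof. exact: (Hw0_al i1). Qed.
Lemma w0t0 : w0 (tau i0) = tau i0. Proof. by case: (Hw0_tau i0). Qed.
Lemma w0b0 : w0 (taub i0) = w0_taub q g (alpha q a0 a1) tau taub i0. Proof. by case: (Hw0_tau i0). Qed.
Lemma w0t1 : w0 (tau i1) = tau i1. Proof. by case: (Hw0_tau i1). Qed.
Lemma w0b1 : w0 (taub i1) = w0_taub q g (alpha q a0 a1) tau taub i1. Proof. by case: (Hw0_tau i1). Qed.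
Lemma w0t2 : w0 (tau i2) = tau i2. Proof. by case: (Hw0_tau i2). Qed.
Lemma w0b2 : w0 (taub i2) = w0_taub q g (alpha q a0 a1) tau taub i2. Proof. by case: (Hw0_tau i2). Qed.
Lemma w1q : w1 q = q. Proof. by case: (HC Q). Qed.
Lemma w1a0 : w1 a0 = a0. Proof. exact: (Hw1_al i0). Qed.
Lemma w1a1 : w1 a1 = a1. Proof. exact: (Hw1_al i1). Qed.
Lemma w1b0 : w1 (taub i0) = taub i0. Proof. by case: (Hw1_tau i0). Qed.
Lemma w1t0 : w1 (tau i0) = w1_tau q g (alpha q a0 a1) tau taub i0. Proof. by case: (Hw1_tau i0). Qed.
Lemma w1b1 : w1 (taub i1) = taub i1. Proof. by case: (Hw1_tau i1). Qed.
Lemma w1t1 : w1 (tau i1) = w1_tau q g (alpha q a0 a1) tau taub i1. Proof. by case: (Hw1_tau i1). Qed.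
Lemma w1b2 : w1 (taub i2) = taub i2. Proof. by case: (Hw1_tau i2). Qed.
Lemma w1t2 : w1 (tau i2) = w1_tau q g (alpha q a0 a1) tau taub i2. Proof. by case: (Hw1_tau i2). Qed.
Lemma rq : r q = q. Proof. by case: (HC Q). Qed.
Lemma ra0 : r a0 = a0. Proof. exact: (Hr_al i0). Qed.
Lemma ra1 : r a1 = a1. Proof. exact: (Hr_al i1). Qed.
Lemma rt0 : r (tau i0) = taub i0. Proof. by case: (Hr_tau i0). Qed.
Lemma rb0 : r (taub i0) = tau i0. Proof. by case: (Hr_tau i0). Qed.
Lemma rt1 : r (tau i1) = taub i1. Proof. by case: (Hr_tau i1). Qed.
Lemma rb1 : r (taub i1) = tau i1. Proof. by case: (Hr_tau i1). Qed.
Lemma rt2 : r (tau i2) = taub i2. Proof. by case: (Hr_tau i2). Qed.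
Lemma rb2 : r (taub i2) = tau i2. Proof. by case: (Hr_tau i2). Qed.

Ltac norm := rewrite /s_tau /s_taub /w0_taub /w1_tau /uu /vv ?nxt0 ?nxt1 ?nxt2 ?prv0 ?prv1 ?prv2 ?al0 ?al1 ?al2.
Ltac push := rewrite ?rmorphXn ?rmorphM ?rmorphD ?fmorphV ?rmorphXn ?rmorph1 ?rmorphN ?rmorphB.
Ltac gimg := rewrite ?s0q ?s1q ?s2q ?s0g ?s1g ?s2g ?s0t ?s1t ?s2t ?s0b ?s1b ?s2b
  ?s0t1 ?s0t2 ?s1t0 ?s1t2 ?s2t0 ?s2t1 ?s0b1 ?s0b2 ?s1b0 ?s1b2 ?s2b0 ?s2b1
  ?s0a0 ?s0a1 ?s1a0 ?s1a1 ?s2a0 ?s2a1 ?piq ?pia0 ?pia1 ?Hpi_g ?pit0 ?pit1 ?pit2 ?pib0 ?pib1 ?pib2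
  ?w0q ?w0a0 ?w0a1 ?Hw0_g ?w0t0 ?w0t1 ?w0t2 ?w0b0 ?w0b1 ?w0b2
  ?w1q ?w1a0 ?w1a1 ?Hw1_g ?w1t0 ?w1t1 ?w1t2 ?w1b0 ?w1b1 ?w1b2
  ?rq ?ra0 ?ra1 ?Hr_g ?rt0 ?rt1 ?rt2 ?rb0 ?rb1 ?rb2.
Ltac step := push; gimg; norm.


Lemma qn0 : q != 0. Proof. by rewrite fmorph_eq0. Qed.
Let gn k := @gen_neq0 _ _ _ Hindep k.
Lemma a0n0 : a0 != 0. Proof. exact: (gn (@Ordinal 9 0 isT)). Qed.
Lemma a1n0 : a1 != 0. Proof. exact: (gn (@Ordinal 9 1 isT)). Qed.
Lemma gn0 : g != 0. Proof. exact: (gn (@Ordinal 9 2 isT)). Qed.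
Lemma t0n0 : tau i0 != 0. Proof. exact: (gn (@Ordinal 9 3 isT)). Qed.
Lemma t1n0 : tau i1 != 0. Proof. exact: (gn (@Ordinal 9 4 isT)). Qed.
Lemma t2n0 : tau i2 != 0. Proof. by rewrite -m1_2; exact: (gn (@Ordinal 9 5 isT)). Qed.
Lemma b0n0 : taub i0 != 0. Proof. exact: (gn (@Ordinal 9 6 isT)). Qed.
Lemma b1n0 : taub i1 != 0. Proof. exact: (gn (@Ordinal 9 7 isT)). Qed.
Lemma b2n0 : taub i2 != 0. Proof. by rewrite -m1_2; exact: (gn (@Ordinal 9 8 isT)). Qed.

Ltac nz0 := rewrite ?qn0 ?a0n0 ?a1n0 ?gn0 ?t0n0 ?t1n0 ?t2n0 ?b0n0 ?b1n0 ?b2n0 ?oner_eq0.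

Lemma numz (x n d : L) : x != 0 -> x = n / d -> n != 0.
Proof. move=> Hx E; move: Hx; rewrite E; apply: contraNneq => ->; by rewrite mul0r. Qed.

Lemma F1 : q ^+ 2 * g ^+ 4 * a0 ^+ 6 * taub 1 * tau 2 + tau 1 * taub 2 != 0.
Proof. apply: (@numz (s i0 (taub i0))); first by rewrite fmorph_eq0 b0n0. by rewrite s0b; norm. Qed.
Lemma F3 : q ^+ 2 * g ^+ 4 * a1 ^+ 6 * taub 2 * tau 0 + tau 2 * taub 0 != 0.
Proof. apply: (@numz (s i1 (taub i1))); first by rewrite fmorph_eq0 b1n0. by rewrite s1b; norm. Qed.
Lemma F2 : a0 ^+ 6 * tau 1 * taub 2 + taub 1 * tau 2 * (q ^+ 2 * g ^+ 4) != 0.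
Proof.
have H : (q ^+ 2)^-1 * (g ^+ 4)^-1 * a0 ^+ 6 * tau 1 * taub 2 + taub 1 * tau 2 != 0.
  apply: (@numz (s i0 (tau i0))); first by rewrite fmorph_eq0 t0n0. by rewrite s0t; norm.
rewrite (_ : _ + _ = ((q ^+ 2)^-1 * (g ^+ 4)^-1 * a0 ^+ 6 * tau 1 * taub 2 + taub 1 * tau 2) * (q ^+ 2 * g ^+ 4)).
  by rewrite mulf_neq0 // mulf_neq0 // expf_neq0 // ?qn0 ?gn0.
by field; nz0.
Qed.
Lemma F4 : a1 ^+ 6 * tau 2 * taub 0 + taub 2 * tau 0 * (q ^+ 2 * g ^+ 4) != 0.
Proof.
have H : (q ^+ 2)^-1 * (g ^+ 4)^-1 * a1 ^+ 6 * tau 2 * taub 0 + taub 2 * tau 0 != 0.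
  apply: (@numz (s i1 (tau i1))); first by rewrite fmorph_eq0 t1n0. by rewrite s1t; norm.
rewrite (_ : _ + _ = ((q ^+ 2)^-1 * (g ^+ 4)^-1 * a1 ^+ 6 * tau 2 * taub 0 + taub 2 * tau 0) * (q ^+ 2 * g ^+ 4)).
  by rewrite mulf_neq0 // mulf_neq0 // expf_neq0 // ?qn0 ?gn0.
by field; nz0.
Qed.

Lemma sC c i : s i (iota c) = iota c. Proof. by case: (HC c). Qed.
Lemma piC c : pi (iota c) = iota c. Proof. by case: (HC c). Qed.
Lemma w0C c : w0 (iota c) = iota c. Proof. by case: (HC c). Qed.
Lemma w1C c : w1 (iota c) = iota c. Proof. by case: (HC c). Qed.
Lemma rC c : r (iota c) = iota c. Proof. by case: (HC c). Qed.
Ltac cC := move=> ? /=; rewrite ?sC ?piC ?w0C ?w1C ?rC ?sC ?piC ?w0C ?w1C ?rC ?sC ?piC ?w0C ?w1C ?rC.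
Ltac gcase := let k := fresh in move=> k;
  case: k => [[|[|[|[|[|[|[|[|[|//]]]]]]]]] ?]; rewrite /gens /= ?m1_2.

Ltac mnz := repeat (apply: mulf_neq0 || apply: expf_neq0); nz0.
Lemma numz2 (x c n d : L) : x != 0 -> x = c * n / d -> n != 0.
Proof. move=> Hx E; move: Hx; rewrite E; apply: contraNneq => ->; by rewrite mulr0 mul0r. Qed.
Lemma neqM (n p m : L) : m != 0 -> p = n * m -> n != 0 -> p != 0.
Proof. by move=> Hm -> Hn; rewrite mulf_neq0. Qed.

Lemma F5 : taub 0 * tau 1 * tau 2 * (g ^+ 4 * (a0 * a1) ^+ 6) + q ^+ 4 * tau 0 * taub 1 * tau 2 +
       q ^+ 2 * g ^+ 4 * tau 0 * tau 1 * taub 2 * (g ^+ 4 * a0 ^+ 6) != 0.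
Proof.
have := w0b0; norm => E.
have H0 : w0 (taub i0) != 0 by rewrite fmorph_eq0 b0n0.
have H := @numz2 _ _ _ _ H0 E.
apply: (@neqM _ _ (g^+4 * (a0*a1)^+6) _ _ H); first by mnz.
field; nz0; done.
Qed.
Lemma F6 : (taub 2 * tau 0 * tau 1 * (q ^+ 2 * g ^+ 4) + a1 ^+ 6 * tau 2 * taub 0 * tau 1) * a0 ^+ 6
   + q ^+ 2 * g ^+ 4 * tau 2 * tau 0 * taub 1 * (q ^+ 2 * g ^+ 4) != 0.
Proof.
have := w0b2; norm => E.
have H0 : w0 (taub i2) != 0 by rewrite fmorph_eq0 b2n0.
have H := @numz2 _ _ _ _ H0 E.
apply: (@neqM _ _ (q^+2 * g^+4 * a0^+6) _ _ H); first by mnz.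
field; nz0; done.
Qed.
Lemma F7 : (taub 1 * tau 2 * tau 0 * (q ^+ 2 * g ^+ 4) + a0 ^+ 6 * tau 1 * taub 2 * tau 0) * q ^+ 2 
  + g ^+ 4 * (a0 * a1) ^+ 6 * tau 1 * tau 2 * taub 0 * g ^+ 4 != 0.
Proof.
have := w0b1; norm => E.
have H0 : w0 (taub i1) != 0 by rewrite fmorph_eq0 b1n0.
have H := @numz2 _ _ _ _ H0 E.
apply: (@neqM _ _ (q^+4 * g^+4) _ _ H); first by mnz.
field; nz0; done.
Qed.

Ltac nz := nz0; rewrite ?F1 ?F2 ?F3 ?F4 ?F5 ?F6 ?F7; done.

Lemma R_ss0 x : s i0 (s i0 (x)) = x.
Proof.
have e : (s i0 \o s i0) =1 idfun.
  apply: (@ext_gen _ _ _ Hgen (s i0 \o s i0) idfun); first by cC.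
  by gcase; do 6 step; field; nz.
exact: e x.
Qed.
Lemma R_br x : s i0 (s i1 (s i0 (x))) = s i1 (s i0 (s i1 (x))).
Proof.
have e : (s i0 \o s i1 \o s i0) =1 (s i1 \o s i0 \o s i1).
  apply: (@ext_gen _ _ _ Hgen (s i0 \o s i1 \o s i0) (s i1 \o s i0 \o s i1)); first by cC.
  by gcase; do 6 step; field; nz.
exact: e x.
Qed.
Lemma R_ps0 x : pi (s i0 (x)) = s i1 (pi (x)).
Proof.
have e : (pi \o s i0) =1 (s i1 \o pi).
  apply: (@ext_gen _ _ _ Hgen (pi \o s i0) (s i1 \o pi)); first by cC.
  by gcase; do 6 step; field; nz.
exact: e x.
Qed.
Lemma R_ps1 x : pi (s i1 (x)) = s i2 (pi (x)).
Proof.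
have e : (pi \o s i1) =1 (s i2 \o pi).
  apply: (@ext_gen _ _ _ Hgen (pi \o s i1) (s i2 \o pi)); first by cC.
  by gcase; do 6 step; field; nz.
exact: e x.
Qed.
Lemma R_ps2 x : pi (s i2 (x)) = s i0 (pi (x)).
Proof.
have e : (pi \o s i2) =1 (s i0 \o pi).
  apply: (@ext_gen _ _ _ Hgen (pi \o s i2) (s i0 \o pi)); first by cC.
  by gcase; do 6 step; field; nz.
exact: e x.
Qed.
Lemma R_p3 x : pi (pi (pi (x))) = x.
Proof.
have e : (pi \o pi \o pi) =1 idfun.
  apply: (@ext_gen _ _ _ Hgen (pi \o pi \o pi) idfun); first by cC.
  by gcase; do 6 step; field; nz.
exact: e x.
Qed.
Lemma R_w0s0 x : w0 (s i0 (x)) = s i0 (w0 (x)).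
Proof.
have e : (w0 \o s i0) =1 (s i0 \o w0).
  apply: (@ext_gen _ _ _ Hgen (w0 \o s i0) (s i0 \o w0)); first by cC.
  by gcase; do 6 step; field; nz.
exact: e x.
Qed.
Lemma R_w0p x : w0 (pi (x)) = pi (w0 (x)).
Proof.
have e : (w0 \o pi) =1 (pi \o w0).
  apply: (@ext_gen _ _ _ Hgen (w0 \o pi) (pi \o w0)); first by cC.
  by gcase; do 6 step; field; nz.
exact: e x.
Qed.
Lemma R_rs0 x : r (s i0 (x)) = s i0 (r (x)).
Proof.
have e : (r \o s i0) =1 (s i0 \o r).
  apply: (@ext_gen _ _ _ Hgen (r \o s i0) (s i0 \o r)); first by cC.
  by gcase; do 6 step; field; nz.
exact: e x.
Qed.
Lemma R_rp x : r (pi (x)) = pi (r (x)).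
Proof.
have e : (r \o pi) =1 (pi \o r).
  apply: (@ext_gen _ _ _ Hgen (r \o pi) (pi \o r)); first by cC.
  by gcase; do 6 step; field; nz.
exact: e x.
Qed.
Lemma R_w0w0 x : w0 (w0 (x)) = x.
Proof.
have e : (w0 \o w0) =1 idfun.
  apply: (@ext_gen _ _ _ Hgen (w0 \o w0) idfun); first by cC.
  by gcase; do 6 step; field; nz.
exact: e x.
Qed.
Lemma R_rr x : r (r (x)) = x.
Proof.
have e : (r \o r) =1 idfun.
  apply: (@ext_gen _ _ _ Hgen (r \o r) idfun); first by cC.
  by gcase; do 6 step; field; nz.
exact: e x.
Qed.
Lemma R_rw0r x : r (w0 (r (x))) = w1 (x).
Proof.
have e : (r \o w0 \o r) =1 (w1).
  apply: (@ext_gen _ _ _ Hgen (r \o w0 \o r) (w1)); first by cC.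
  by gcase; do 6 step; field; nz.
exact: e x.
Qed.

Variables (T1i T2i T4i : L -> L).
Hypotheses (HT1i : cancel (pi \o s 2%R \o s 1%R) T1i) (HT1i' : cancel T1i (pi \o s 2%R \o s 1%R))
  (HT2i : cancel (s 1%R \o pi \o s 2%R) T2i) (HT2i' : cancel T2i (s 1%R \o pi \o s 2%R))
  (HT4i : cancel (r \o w0) T4i) (HT4i' : cancel T4i (r \o w0)).

Lemma main_sec :
  let tN := tauNM (pi \o s 2%R \o s 1%R) T1i (s 1%R \o pi \o s 2%R) T2i
                  (r \o w0) T4i (tau 1%R) in
  forall n m N : int,
  s 0%R (tN n m N) = tN (- n) (m - n) N /\
  s 1%R (tN n m N) = tN (m - 1) (n + 1) N /\
  s 2%R (tN n m N) = tN (n - m) (- m) N /\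
  pi (tN n m N) = tN (- m) (n - m + 1) N /\
  w0 (tN n m N) = tN n m (- N) /\
  w1 (tN n m N) = tN n m (2 - N) /\
  r (tN n m N) = tN n m (1 - N).
Proof.
exact: (@grp_main L (s 0%R) (s 1%R) (s 2%R) pi w0 w1 r (tau 1%R) (tau 2%R)
  R_ss0 R_br R_ps0 R_ps1 R_ps2 R_p3 R_w0s0 R_w0p R_rs0 R_rp R_w0w0 R_rr R_rw0r
  s0t1 s2t1 s1t2 pit1 w0t1 T1i T2i T4i HT1i HT1i' HT2i HT2i' HT4i HT4i').
Qed.

End Main.

Theorem proposition3p3
  (L : fieldType) (iota : {rmorphism CC -> L})
  (Q : CC) (HQ : Q != 0)
  (a0 a1 g : L) (tau taub : 'I_3 -> L)
  (* K = C(alpha_0, alpha_1, gamma, tau_i, taubar_i): the nine elements are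
     algebraically independent over C and generate L as a field over C *)
  (Hindep : forall p : {mpoly CC[9]}, mmap iota (gens a0 a1 g tau taub) p = 0 -> p = 0)
  (Hgen : forall x : L, exists p q : {mpoly CC[9]},
      x = mmap iota (gens a0 a1 g tau taub) p / mmap iota (gens a0 a1 g tau taub) q)
  (s : 'I_3 -> {rmorphism L -> L}) (pi w0 w1 r : {rmorphism L -> L})
  (* they are field automorphisms fixing C *)
  (Hbij_s : forall i, bijective (s i)) (Hbij_pi : bijective pi)
  (Hbij_w0 : bijective w0) (Hbij_w1 : bijective w1) (Hbij_r : bijective r)
  (HC : forall c : CC, [/\ forall i, s i (iota c) = iota c, pi (iota c) = iota c,
          w0 (iota c) = iota c, w1 (iota c) = iota c & r (iota c) = iota c])
  (* action on the parameters *)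
  (Hs_al : forall i j, s i (alpha (iota Q) a0 a1 j) =
      if i == j then (alpha (iota Q) a0 a1 i)^-1
      else alpha (iota Q) a0 a1 j * alpha (iota Q) a0 a1 i)
  (Hs_g : forall i, s i g = g)
  (Hpi_al : forall j, pi (alpha (iota Q) a0 a1 j) = alpha (iota Q) a0 a1 (nxt j))
  (Hpi_g : pi g = g)
  (Hw0_al : forall j, w0 (alpha (iota Q) a0 a1 j) = alpha (iota Q) a0 a1 j)
  (Hw1_al : forall j, w1 (alpha (iota Q) a0 a1 j) = alpha (iota Q) a0 a1 j)
  (Hr_al : forall j, r (alpha (iota Q) a0 a1 j) = alpha (iota Q) a0 a1 j)
  (Hw0_g : w0 g = g^-1)
  (Hw1_g : w1 g = ((iota Q) ^+ 2)^-1 * g^-1)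
  (Hr_g : r g = (iota Q)^-1 * g^-1)
  (* action on the tau variables *)
  (Hs_tau : forall i, s i (tau i) = s_tau (iota Q) g (alpha (iota Q) a0 a1) tau taub i)
  (Hs_taub : forall i, s i (taub i) = s_taub (iota Q) g (alpha (iota Q) a0 a1) tau taub i)
  (Hs_other : forall i j, j != i -> s i (tau j) = tau j /\ s i (taub j) = taub j)
  (Hpi_tau : forall i, pi (tau i) = tau (nxt i) /\ pi (taub i) = taub (nxt i))
  (Hw0_tau : forall i, w0 (tau i) = tau i /\
      w0 (taub i) = w0_taub (iota Q) g (alpha (iota Q) a0 a1) tau taub i)
  (Hw1_tau : forall i, w1 (taub i) = taub i /\
      w1 (tau i) = w1_tau (iota Q) g (alpha (iota Q) a0 a1) tau taub i)
  (Hr_tau : forall i, r (tau i) = taub i /\ r (taub i) = tau i)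
  (* T1 = pi s2 s1, T2 = s1 pi s2, T4 = r w0, and their inverse automorphisms *)
  (T1i T2i T4i : L -> L)
  (HT1i : cancel (pi \o s 2%R \o s 1%R) T1i) (HT1i' : cancel T1i (pi \o s 2%R \o s 1%R))
  (HT2i : cancel (s 1%R \o pi \o s 2%R) T2i) (HT2i' : cancel T2i (s 1%R \o pi \o s 2%R))
  (HT4i : cancel (r \o w0) T4i) (HT4i' : cancel T4i (r \o w0)) :
  let tN := tauNM (pi \o s 2%R \o s 1%R) T1i (s 1%R \o pi \o s 2%R) T2i
                  (r \o w0) T4i (tau 1%R) in
  forall n m N : int,
  s 0%R (tN n m N) = tN (- n) (m - n) N /\
  s 1%R (tN n m N) = tN (m - 1) (n + 1) N /\
  s 2%R (tN n m N) = tN (n - m) (- m) N /\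
  pi (tN n m N) = tN (- m) (n - m + 1) N /\
  w0 (tN n m N) = tN n m (- N) /\
  w1 (tN n m N) = tN n m (2 - N) /\
  r (tN n m N) = tN n m (1 - N).
Proof.
eapply main_sec; eassumption.
Qed.
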